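(* Let $k\ge1$ be an integer and $a>0$ a constant (playing the role of $F^{(k)}(0)$). For $c\in\mathbb R$ define \[ \psi(c)=\frac{\int_0^\infty x\exp\{cx-\frac{a}{(k+1)!}x^{k+1}\}dx}{\int_0^\infty \exp\{cx-\frac{a}{(k+1)!}x^{k+1}\}dx},\qquad b(c)=\sqrt{2\left|-c\,\psi(c)+\frac{a}{k!}\psi(c)^{k+1}\right|}. \] Then $\lim_{c\to-\infty}b(c)=\sqrt2$. *)

(* Defs.v *)
From HB Require Import structures.
From mathcomp Require Import all_boot all_order all_algebra.
From mathcomp Require Import all_classical all_reals all_analysis.
Set Implicit Arguments. Unset Strict Implicit. Unset Printing Implicit Defensive.
Import Order.TTheory GRing.Theory Num.Theory.
Import numFieldNormedType.Exports.
Local Open Scope classical_set_scope.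
Local Open Scope ring_scope.

Definition wgt {R : realType} (k : nat) (a c x : R) : R :=
  expR (c * x - a / (k.+1)`!%:R * x ^+ k.+1).

Definition psi {R : realType} (k : nat) (a c : R) : R :=
  Rintegral (@lebesgue_measure R) `[0, +oo[%classic (fun x => x * wgt k a c x)
  / Rintegral (@lebesgue_measure R) `[0, +oo[%classic (fun x => wgt k a c x).

Definition bfun {R : realType} (k : nat) (a c : R) : R :=
  Num.sqrt (2 * `| - c * psi k a c + a / k`!%:R * psi k a c ^+ k.+1 |).

(* Main.v *)
Require Import Defs.
From HB Require Import structures.
From mathcomp Require Import all_boot all_order all_algebra.
From mathcomp Require Import all_classical all_reals all_analysis.
From mathcomp Require Import ring lra measurable_realfun.
Import Order.TTheory GRing.Theory Num.Theory.
Import numFieldNormedType.Exports.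
Local Open Scope classical_set_scope.
Local Open Scope ring_scope.

Section S.
Context {R : realType}.
Notation mu := (@lebesgue_measure R).

Lemma expc_cvg0 (c : R) : c < 0 -> expR (c * x) @[x --> +oo] --> 0.
Proof.
move=> c0.
rewrite (_ : (fun x => expR (c * x)) = (fun z => expR (- z)) \o (fun z => (- c) * z)); last first.
  by apply: funext => x /=; rewrite mulNr opprK.
apply: (@cvg_comp _ _ _ _ _ _ (pinfty_nbhs R)); last exact: cvgr_expR.
apply: gt0_cvgMry; first by rewrite oppr_gt0.
exact: cvg_id.
Qed.

Lemma xexpc_cvg0 (c : R) : c < 0 -> x * expR (c * x) @[x --> +oo] --> 0.
Proof.
move=> c0.
apply: (@squeeze_cvgr _ _ _ _ (cst 0) (fun x => (- 2 / c) * expR ((c / 2) * x))).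
- near=> x => /=.
  have x0 : 0 <= x by near: x; apply: nbhs_pinfty_ge.
  rewrite mulr_ge0 ?expR_ge0 //=.
  have h1 : - (c / 2 * x) <= expR (- (c / 2 * x)).
    by apply: le_trans (expR_ge1Dx _); rewrite lerDr.
  have -> : expR (c * x) = expR (c / 2 * x) * expR (c / 2 * x).
    by rewrite -expRD -mulrDl -splitr.
  rewrite mulrA ler_wpM2r ?expR_ge0 //.
  have e0 : 0 < expR (c / 2 * x) := expR_gt0 _.
  have : x <= (-2 / c) * expR (- (c / 2 * x)).
    have cn0 : c != 0 by rewrite lt_eqF.
    have xe : x = (- 2 / c) * (- (c / 2 * x)) by field.
    rewrite {1}xe ler_wpM2l //.
    rewrite mulNr -mulrN mulr_ge0 //; rewrite -invrN invr_ge0 oppr_ge0 ltW //.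
  rewrite expRN => h.
  rewrite -(ler_pM2r e0) in h.
  by rewrite divfK ?gt_eqF // in h.
- exact: cvg_cst.
- rewrite -(mulr0 (- 2 / c)).
  apply: cvgMr.
  apply: expc_cvg0.
  by rewrite pmulr_llt0.
Unshelve. all: end_near. Qed.


Lemma is_derive_lin (c x : R) : is_derive x 1 (fun y => c * y) c.
Proof.
have := @is_deriveZ R R^o R^o id c x 1 1 (is_derive_id _ _).
by rewrite /GRing.scale /= mulr1.
Qed.

Lemma is_derive_e (c x : R) : is_derive x 1 (fun y => expR (c * y)) (c * expR (c * x)).
Proof.
have := @is_derive1_comp _ expR (fun y : R => c * y) x _ _ (is_derive_expR _) (is_derive_lin c x).
by rewrite mulrC.
Qed.

Lemma cont_e (c : R) : continuous (fun y : R => expR (c * y)).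
Proof.
move=> x; apply: differentiable_continuous; apply/derivable1_diffP.
exact: (@ex_derive _ _ _ _ _ _ _ (is_derive_e c x)).
Qed.

Lemma M0 (c : R) : c < 0 ->
  (\int[mu]_(x in `[0%R, +oo[) (expR (c * x))%:E = (- c^-1)%:E)%E.
Proof.
move=> c0.
have cn0 : c != 0 by rewrite lt_eqF.
have dF (x : R) : is_derive x (1 : R) (fun y : R => expR (c * y) / c) (expR (c * x)).
  have := @is_deriveZ R R^o R^o (fun y => expR (c * y)) c^-1 x 1 _ (is_derive_e c x).
  rewrite /GRing.scale /= mulrA mulVf // mul1r.
  move=> h; suff -> : (fun y : R => expR (c * y) / c) = c^-1 \*: (fun y : R^o => expR (c * y)) by [].
  by apply: funext => y; rewrite /= /GRing.scale /= mulrC.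
rewrite (@ge0_continuous_FTC2y R _ (fun y => expR (c * y) / c) 0 0).
- by rewrite mulr0 expR0 mul1r -EFinB sub0r.
- by move=> x _; exact: expR_ge0.
- by apply: continuous_subspaceT; exact: cont_e.
- rewrite -(mul0r c^-1); apply: cvgMl; exact: expc_cvg0.
- by move=> x _; exact: (@ex_derive _ _ _ _ _ _ _ (dF x)).
- apply: cvg_at_right_filter; apply: cvgMl; exact: cont_e.
- by move=> x _; rewrite derive1E (@derive_val _ _ _ _ _ _ _ (dF x)).
Qed.


Lemma M1 (c : R) : c < 0 ->
  (\int[mu]_(x in `[0%R, +oo[) (x * expR (c * x))%:E = (c^-2)%:E)%E.
Proof.
move=> c0.
have cn0 : c != 0 by rewrite lt_eqF.
have hg (x : R) : is_derive x (1 : R) (fun y : R => c^-1 * y - c^-2) (c^-1).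
  have := @is_deriveB R R^o R^o (fun y => c^-1 * y) (cst (c^-2)) x 1 _ _ (is_derive_lin _ x) (is_derive_cst _ _ _).
  by rewrite subr0.
have dF (x : R) : is_derive x (1 : R) (fun y : R => expR (c * y) * (c^-1 * y - c^-2)) (x * expR (c * x)).
  have h := is_deriveM (is_derive_e c x) (hg x).
  have Hv : (expR (c * x) *: c^-1 + (c^-1 * x - c ^- 2) *: (c * expR (c * x))) = x * expR (c * x).
    rewrite /GRing.scale /=; field; exact: cn0.
  rewrite Hv in h.
  exact h.
rewrite (@ge0_continuous_FTC2y R _ (fun y : R => expR (c * y) * (c^-1 * y - c^-2)) 0 0).
- by rewrite mulr0 expR0 mul1r mulr0 sub0r -EFinB sub0r opprK.
- by move=> x x0; rewrite mulr_ge0 // expR_ge0.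
- apply: continuous_subspaceT => x.
  apply: (@continuousM _ R^o (fun y => y) (fun y => expR (c * y))); first exact: cvg_id.
  exact: cont_e.
- have -> : (fun y : R => expR (c * y) * (c^-1 * y - c^-2)) = (fun y => c^-1 * (y * expR (c * y)) - c^-2 * expR (c * y)).
    by apply: funext => y; ring.
  have -> : (0:R) = c^-1 * 0 - c^-2 * 0 by rewrite !mulr0 subr0.
  apply: cvgB; apply: cvgMr; [exact: xexpc_cvg0 | exact: expc_cvg0].
- by move=> x _; exact: (@ex_derive _ _ _ _ _ _ _ (dF x)).
- apply: cvg_at_right_filter.
  apply: (@continuousM _ R^o (fun y => expR (c * y)) (fun y => c^-1 * y - c^-2)); first exact: cont_e.
  apply: (@continuousB _ R^o); last exact: cst_continuous.
  apply: (@continuousM _ R^o); [exact: cst_continuous | exact: cvg_id].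
- by move=> x _; rewrite derive1E (@derive_val _ _ _ _ _ _ _ (dF x)).
Qed.


Lemma pow_le_exp (n : nat) (y : R) : 0 <= y -> y ^+ n <= n`!%:R * expR y.
Proof.
move=> y0; case: n => [|n].
  by rewrite expr0 fact0 mul1r -expR0 ler_expR.
have := expR_ge1Dxn n y0.
have f0 : 0 < (n.+1)`!%:R :> R by rewrite ltr0n fact_gt0.
move=> h; rewrite mulrC -ler_pdivrMr //.
by apply: le_trans h; rewrite lerDr.
Qed.

Lemma pt_bound (n : nat) (c x : R) : c < 0 -> 0 <= x ->
  x ^+ n * expR (c * x) <= n`!%:R * (2 / (- c)) ^+ n * expR (c / 2 * x).
Proof.
move=> c0 x0.
have cn0 : c != 0 by rewrite lt_eqF.
have y0 : 0 <= - (c / 2 * x).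
  by rewrite -mulNr mulr_ge0 // -mulNr mulr_ge0 // oppr_ge0 ltW.
have h := @pow_le_exp n _ y0.
have xe : x = (2 / (- c)) * (- (c / 2 * x)) by field.
have -> : expR (c * x) = expR (c / 2 * x) * expR (c / 2 * x).
  by rewrite -expRD -mulrDl -splitr.
rewrite {1}xe exprMn mulrA.
rewrite [X in _ <= X](_ : _ = (2 / - c) ^+ n * (n`!%:R * expR (- (c / 2 * x))) * (expR (c / 2 * x) * expR (c / 2 * x))); last first.
  by rewrite expRN; field; rewrite expR_eq0.
rewrite -[X in X <= _]mulrA ler_wpM2r ?mulr_ge0 ?expR_ge0 // ler_wpM2l //.
by rewrite exprn_ge0 // divr_ge0 // oppr_ge0 ltW.
Qed.


Lemma meas_pe (n : nat) (c : R) (D : set R) :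
  measurable_fun D (fun x : R => x ^+ n * expR (c * x)).
Proof.
apply: measurable_realfun.measurable_funM; first exact: measurable_realfun.exprn_measurable.
apply: measurableT_comp; first exact: measurable_expR.
apply: measurable_realfun.measurable_funM => //; exact: measurable_id.
Qed.

Lemma meas_e (c : R) (D : set R) :
  measurable_fun D (fun x : R => expR (c * x)).
Proof.
apply: measurableT_comp; first exact: measurable_expR.
apply: measurable_realfun.measurable_funM => //; exact: measurable_id.
Qed.

Lemma Mn (n : nat) (c : R) : c < 0 ->
  (\int[mu]_(x in `[0%R, +oo[) (x ^+ n * expR (c * x))%:E <= (n`!%:R * (2 / (- c)) ^+ n.+1)%:E)%E.
Proof.
move=> c0.
have c20 : c / 2 < 0 by rewrite pmulr_llt0.
have cn0 : c != 0 by rewrite lt_eqF.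
apply: (@le_trans _ _ (\int[mu]_(x in `[0%R, +oo[) ((n`!%:R * (2 / (- c)) ^+ n)%:E * (expR (c / 2 * x))%:E))%E).
  apply: ge0_le_integral => //.
  - move=> x; rewrite /= in_itv /= andbT => x0. by rewrite lee_fin mulr_ge0 ?expR_ge0 // exprn_ge0 // divr_ge0 // oppr_ge0 ltW.
  - by apply/measurable_EFinP; exact: meas_pe.
  - apply: emeasurable_funM => //; apply/measurable_EFinP.
    exact: meas_e.
  - move=> x; rewrite /= in_itv /= andbT => x0.
    by rewrite -EFinM lee_fin pt_bound.
rewrite ge0_integralZl_EFin //.
- rewrite (@M0 _ c20) -EFinM lee_fin exprSr -mulrA.
  have -> : - (c / 2)^-1 = 2 / - c by field.
  by [].
- by apply/measurable_EFinP; exact: meas_e.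
- by rewrite mulr_ge0 // exprn_ge0 // divr_ge0 // oppr_ge0 ltW.
Qed.


Lemma sandwich (g e h : R -> R) (E H : R) :
  (forall x, 0 <= x -> 0 <= g x) -> (forall x, 0 <= x -> 0 <= h x) ->
  measurable_fun (`[0%R, +oo[ : set R) g -> measurable_fun (`[0%R, +oo[ : set R) e -> measurable_fun (`[0%R, +oo[ : set R) h ->
  (forall x, 0 <= x -> g x <= e x) -> (forall x, 0 <= x -> e x <= g x + h x) ->
  (\int[mu]_(x in `[0%R, +oo[) (e x)%:E = E%:E)%E ->
  (\int[mu]_(x in `[0%R, +oo[) (h x)%:E <= H%:E)%E ->
  E - H <= Rintegral mu `[0%R, +oo[ g <= E.
Proof.
move=> g0 h0 mg me mh ge egh eE hH.
have mI : measurable (`[0%R, +oo[ : set R) by [].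
have g0' : forall x, `[0%R, +oo[%classic x -> (0 <= (g x)%:E)%E.
  by move=> x; rewrite /= in_itv /= andbT => x0; rewrite lee_fin g0.
have h0' : forall x, `[0%R, +oo[%classic x -> (0 <= (h x)%:E)%E.
  by move=> x; rewrite /= in_itv /= andbT => x0; rewrite lee_fin h0.
have Gle : (\int[mu]_(x in `[0%R, +oo[) (g x)%:E <= E%:E)%E.
  rewrite -eE; apply: ge0_le_integral => //.
  - by apply/measurable_EFinP.
  - by apply/measurable_EFinP.
  - by move=> x; rewrite /= in_itv /= andbT => x0; rewrite lee_fin ge.
have Gge0 : (0 <= \int[mu]_(x in `[0%R, +oo[) (g x)%:E)%E by apply: integral_ge0.
have Gfin : (\int[mu]_(x in `[0%R, +oo[) (g x)%:E)%E \is a fin_num.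
  by rewrite ge0_fin_numE // (le_lt_trans Gle) // ltry.
have Hge0 : (0 <= \int[mu]_(x in `[0%R, +oo[) (h x)%:E)%E by apply: integral_ge0.
have Hfin : (\int[mu]_(x in `[0%R, +oo[) (h x)%:E)%E \is a fin_num.
  by rewrite ge0_fin_numE // (le_lt_trans hH) // ltry.
have Ele : (E%:E <= \int[mu]_(x in `[0%R, +oo[) (g x)%:E + \int[mu]_(x in `[0%R, +oo[) (h x)%:E)%E.
  rewrite -eE -ge0_integralD //; last 2 first.
  - by apply/measurable_EFinP.
  - by apply/measurable_EFinP.
  apply: ge0_le_integral => //.
  - move=> x; rewrite /= in_itv /= andbT => x0; rewrite lee_fin.
    exact: le_trans (g0 _ x0) (ge _ x0).
  - by apply/measurable_EFinP.
  - by apply: emeasurable_funD; apply/measurable_EFinP.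
  - by move=> x; rewrite /= in_itv /= andbT => x0; rewrite -EFinD lee_fin egh.
rewrite /Rintegral; apply/andP; split.
- rewrite lerBlDr.
  rewrite -(fineK Gfin) -(fineK Hfin) -EFinD lee_fin in Ele.
  apply: (le_trans Ele); rewrite lerD2l.
  by rewrite -lee_fin fineK.
- by rewrite -lee_fin fineK.
Qed.


Lemma intZ_bound (al : R) (n : nat) (c : R) : 0 <= al -> c < 0 ->
  (\int[mu]_(x in `[0%R, +oo[) (al * (x ^+ n * expR (c * x)))%:E <= (al * (n`!%:R * (2 / (- c)) ^+ n.+1))%:E)%E.
Proof.
move=> al0 c0.
under eq_integral do rewrite EFinM.
rewrite ge0_integralZl_EFin //.
- by rewrite EFinM lee_wpmul2l // ?lee_fin // Mn.
- by move=> x; rewrite /= in_itv /= andbT => x0; rewrite lee_fin mulr_ge0 ?expR_ge0 // exprn_ge0.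
- by apply/measurable_EFinP; exact: meas_pe.
Qed.

Variables (k : nat) (a : R).
Hypothesis ha : 0 < a.

Let al := a / (k.+1)`!%:R.
Lemma al_ge0 : 0 <= al.
Proof. by rewrite /al divr_ge0 // ltW. Qed.

Lemma wgtE c x : wgt k a c x = expR (c * x) * expR (- (al * x ^+ k.+1)).
Proof. by rewrite /wgt -expRD. Qed.

Lemma wgt_le c x : 0 <= x -> wgt k a c x <= expR (c * x).
Proof.
move=> x0; rewrite wgtE -[X in _ <= X]mulr1 ler_wpM2l ?expR_ge0 //.
by rewrite expR_le1 oppr_le0 mulr_ge0 ?al_ge0 // exprn_ge0.
Qed.

Lemma wgt_ge c x : 0 <= x -> expR (c * x) <= wgt k a c x + al * (x ^+ k.+1 * expR (c * x)).
Proof.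
move=> x0; rewrite wgtE.
have h := expR_ge1Dx (- (al * x ^+ k.+1)).
have e0 := expR_ge0 (c * x).
have : expR (c * x) * (1 + - (al * x ^+ k.+1)) <= expR (c * x) * expR (- (al * x ^+ k.+1)).
  by rewrite ler_wpM2l.
move=> h2; rewrite -lerBlDr; apply: le_trans h2.
by rewrite le_eqVlt; apply/orP; left; apply/eqP; ring.
Qed.

Lemma wgt_ge0 c x : 0 <= wgt k a c x.
Proof. exact: expR_ge0. Qed.

Lemma meas_wgt c : measurable_fun (`[0%R, +oo[ : set R) (wgt k a c).
Proof.
apply: measurableT_comp; first exact: measurable_expR.
apply: measurable_realfun.measurable_funB.
  apply: measurable_realfun.measurable_funM => //; exact: measurable_id.
apply: measurable_realfun.measurable_funM => //; exact: measurable_realfun.exprn_measurable.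
Qed.

Lemma Dbound c : c < 0 ->
  - c^-1 - al * ((k.+1)`!%:R * (2 / (- c)) ^+ k.+2) <=
  Rintegral mu `[0%R, +oo[ (fun x => wgt k a c x) <= - c^-1.
Proof.
move=> c0.
apply: (@sandwich _ (fun x => expR (c * x)) (fun x => al * (x ^+ k.+1 * expR (c * x)))).
- by move=> x _; exact: wgt_ge0.
- by move=> x x0; rewrite mulr_ge0 ?al_ge0 // mulr_ge0 ?expR_ge0 // exprn_ge0.
- exact: meas_wgt.
- exact: meas_e.
- apply: measurable_realfun.measurable_funM => //; exact: meas_pe.
- by move=> x x0; exact: wgt_le.
- by move=> x x0; exact: wgt_ge.
- exact: M0.
- exact: intZ_bound al_ge0 c0.
Qed.

Lemma Nbound c : c < 0 ->
  c^-2 - al * ((k.+2)`!%:R * (2 / (- c)) ^+ k.+3) <=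
  Rintegral mu `[0%R, +oo[ (fun x => x * wgt k a c x) <= c^-2.
Proof.
move=> c0.
apply: (@sandwich _ (fun x => x * expR (c * x)) (fun x => al * (x ^+ k.+2 * expR (c * x)))).
- by move=> x x0; rewrite mulr_ge0 // wgt_ge0.
- by move=> x x0; rewrite mulr_ge0 ?al_ge0 // mulr_ge0 ?expR_ge0 // exprn_ge0.
- apply: measurable_realfun.measurable_funM; [exact: measurable_id | exact: meas_wgt].
- apply: measurable_realfun.measurable_funM; [exact: measurable_id | exact: meas_e].
- apply: measurable_realfun.measurable_funM => //; exact: meas_pe.
- by move=> x x0; rewrite ler_wpM2l // wgt_le.
- move=> x x0; have := @wgt_ge c x x0.
  move/(ler_wpM2l x0); rewrite mulrDr => h; apply: le_trans h _.
  by rewrite lerD2l le_eqVlt; apply/orP; left; apply/eqP; rewrite !exprS; ring.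
- exact: M1.
- exact: intZ_bound al_ge0 c0.
Qed.


Lemma cvgXn_loc (f : R -> R) (l : R) n :
  f x @[x --> -oo] --> l -> f x ^+ n @[x --> -oo] --> l ^+ n.
Proof.
move=> h; elim: n => [|n IH].
  rewrite expr0; under eq_fun do rewrite expr0; exact: cvg_cst.
rewrite exprS; under eq_fun do rewrite exprS.
exact: cvgM.
Qed.

Lemma final (hpsi1 : - c * psi k a c @[c --> -oo] --> (1 : R))
  (hpsi0 : psi k a c @[c --> -oo] --> (0 : R)) :
  bfun k a c @[c --> -oo] --> Num.sqrt 2.
Proof.
have hE : (- c * psi k a c + a / k`!%:R * psi k a c ^+ k.+1) @[c --> -oo] --> (1 : R).
  rewrite -[X in _ --> X]addr0.
  apply: cvgD => //.
  rewrite [X in _ --> X](_ : _ = a / k`!%:R * 0 ^+ k.+1); last by rewrite expr0n /= mulr0.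
  by apply: cvgMr; apply: cvgXn_loc.
have h2 : (2 * `| - c * psi k a c + a / k`!%:R * psi k a c ^+ k.+1 |) @[c --> -oo] --> (2 : R).
  rewrite [X in _ --> X](_ : _ = 2 * `|1 : R|); last by rewrite normr1 mulr1.
  by apply: cvgMr; apply: cvg_norm.
rewrite /bfun.
apply: (cvg_comp _ _ h2).
exact: sqrt_continuous.
Qed.


Lemma u0 : (2 / - c) @[c --> -oo] --> (0 : R).
Proof.
have hi : c^-1 @[c --> -oo] --> (0 : R).
  apply/(@ltr0_cvgV0 _ _ _ _ (fun c : R => c)).
    by near=> c; near: c; apply: nbhs_ninfty_lt; exact: real0.
  exact: cvg_id.
rewrite (_ : (fun c : R => 2 / - c) = fun c => - 2 * c^-1); last first.
  by apply: funext => c; rewrite invrN mulrN mulNr.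
rewrite [X in _ --> X](_ : _ = - 2 * 0); last by rewrite mulr0.
by apply: cvgMr.
Unshelve. all: end_near. Qed.

Lemma uk : (2 / - c) ^+ k.+1 @[c --> -oo] --> (0 : R).
Proof.
rewrite [X in _ --> X](_ : _ = 0 ^+ k.+1); last by rewrite expr0n.
exact: cvgXn_loc u0.
Qed.


Lemma eqle (x y : R) : x = y -> x <= y.
Proof. by move->. Qed.

Lemma hD : - c * Rintegral mu `[0%R, +oo[ (fun x => wgt k a c x) @[c --> -oo] --> (1 : R).
Proof.
apply: (@squeeze_cvgr _ _ _ _ (fun c => 1 - al * (k.+1)`!%:R * 2 * (2 / - c) ^+ k.+1) (cst 1)).
- near=> c.
  have c0 : c < 0 by near: c; apply: nbhs_ninfty_lt; exact: real0.
  have cn0 : c != 0 by rewrite lt_eqF.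
  have /andP[h1 h2] := @Dbound c c0.
  have nc0 : 0 <= - c by rewrite oppr_ge0 ltW.
  apply/andP; split.
  + apply: le_trans (ler_wpM2l nc0 h1).
    apply: eqle.
    rewrite [(2 / - c) ^+ k.+2]exprS; move: ((2 / - c) ^+ k.+1) => v; field.
    by [].  
  + apply: le_trans (ler_wpM2l nc0 h2) _.
    by apply: eqle; rewrite /cst /=; field.
- rewrite [X in _ --> X](_ : _ = 1 - al * (k.+1)`!%:R * 2 * 0); last by rewrite mulr0 subr0.
  apply: cvgB; first exact: cvg_cst.
  by apply: cvgMr; exact: uk.
- exact: cvg_cst.
Unshelve. all: end_near. Qed.

Lemma hN : c ^+ 2 * Rintegral mu `[0%R, +oo[ (fun x => x * wgt k a c x) @[c --> -oo] --> (1 : R).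
Proof.
apply: (@squeeze_cvgr _ _ _ _ (fun c => 1 - al * (k.+2)`!%:R * 4 * (2 / - c) ^+ k.+1) (cst 1)).
- near=> c.
  have c0 : c < 0 by near: c; apply: nbhs_ninfty_lt; exact: real0.
  have cn0 : c != 0 by rewrite lt_eqF.
  have /andP[h1 h2] := @Nbound c c0.
  have nc0 : 0 <= c ^+ 2 by rewrite sqr_ge0.
  apply/andP; split.
  + apply: le_trans (ler_wpM2l nc0 h1).
    apply: eqle.
    rewrite [(2 / - c) ^+ k.+3]exprS [(2 / - c) ^+ k.+2]exprS; move: ((2 / - c) ^+ k.+1) => v; field.
    by [].
  + apply: le_trans (ler_wpM2l nc0 h2) _.
    by apply: eqle; rewrite /cst /=; field.
- rewrite [X in _ --> X](_ : _ = 1 - al * (k.+2)`!%:R * 4 * 0); last by rewrite mulr0 subr0.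
  apply: cvgB; first exact: cvg_cst.
  by apply: cvgMr; exact: uk.
- exact: cvg_cst.
Unshelve. all: end_near. Qed.


Lemma alg1 (c N D : R) : c != 0 -> c ^+ 2 * N * ((- c)^-1 / D) = - c * (N / D).
Proof. move=> cn0; move: (D^-1) => iD; by field. Qed.

Lemma hpsi1 : - c * psi k a c @[c --> -oo] --> (1 : R).
Proof.
have FF : Filter (ninfty_nbhs R) by exact: _.
have H := cvgM hN (cvgV (oner_neq0 R) hD).
move: H => /(_ FF FF) H.
rewrite invr1 mulr1 in H.
apply: cvg_trans H.
apply: near_eq_cvg; near=> c.
have c0 : c < 0 by near: c; apply: nbhs_ninfty_lt; exact: real0.
have cn0 : c != 0 by rewrite lt_eqF.
rewrite /psi /= invfM.
exact: alg1.
Unshelve. all: end_near. Qed.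

Lemma hpsi0 : psi k a c @[c --> -oo] --> (0 : R).
Proof.
have FF : Filter (ninfty_nbhs R) by exact: _.
have H1 := cvgMl (b := 2^-1) u0.
move: H1 => /(_ FF) H1.
have H := cvgM H1 hpsi1.
move: H => /(_ FF) H.
rewrite mul0r mul0r in H.
apply: cvg_trans H.
apply: near_eq_cvg; near=> c.
have c0 : c < 0 by near: c; apply: nbhs_ninfty_lt; exact: real0.
have cn0 : c != 0 by rewrite lt_eqF.
rewrite /=.
move: (psi k a c) => p.
by field.
Unshelve. all: end_near. Qed.

Lemma main : bfun k a c @[c --> -oo] --> Num.sqrt 2.
Proof. exact: final hpsi1 hpsi0. Qed.

End S.

Theorem lemma4 (R : realType) (k : nat) (a : R) (hk : (1 <= k)%N) (ha : 0 < a) :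
  bfun k a c @[c --> -oo] --> Num.sqrt 2.
Proof. exact: main ha. Qed.
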